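(* Let $\theta>0$ be such that $\Lambda^*_\nu(\theta)=\ln 2$. Then for all $0\le x\le 1$, $$\Lambda^*_\nu(\theta x)\ge (\ln\cosh)^*(x)=\tfrac12\big[(1+x)\ln(1+x)+(1-x)\ln(1-x)\big].$$
   Context: $\nu$ is the symmetric exponential distribution on $\mathbb{R}$ with density $\frac12 e^{-|x|}$, and its Cramer transform is $\Lambda^*_\nu(x)=\sup_y\{xy-\ln\int e^{yz}d\nu(z)\}=\sqrt{x^2+1}-1-\ln\frac{\sqrt{x^2+1}+1}{2}$. $(\ln\cosh)^*$ is the Legendre transform $f^*(x)=\sup_y\{xy-f(y)\}$ of $\ln\cosh$; at $x=1$ it equals $\ln 2$ (with $0\ln 0=0$). *)

(* Defs.v *)
From Stdlib Require Import Reals.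
From Coquelicot Require Import Coquelicot.
Open Scope R_scope.

(* Cramer transform of the symmetric exponential law nu (density e^{-|x|}/2),
   in the closed form given in the paper's context. *)
Definition Lambda_star_nu (x : R) : R :=
  sqrt (x ^ 2 + 1) - 1 - ln ((sqrt (x ^ 2 + 1) + 1) / 2).

Definition legendre (f : R -> R) (x : R) : Rbar :=
  Lub_Rbar (fun v => exists y : R, v = x * y - f y).

Definition ln_cosh (y : R) : R := ln (cosh y).

(* Main.v *)
Require Import Defs.
From Stdlib Require Import Reals Lra.
From Coquelicot Require Import Coquelicot.
Open Scope R_scope.

Lemma mvt_open (f df : R -> R) (a b : R) : a < b ->
  (forall c, a < c < b -> is_derive f c (df c)) ->
  (forall c, a <= c <= b -> continuity_pt f c) ->
  exists c, a < c < b /\ f b - f a = df c * (b - a).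
Proof.
  intros Hab Hd Hc.
  assert (pr1 : forall c, a < c < b -> derivable_pt f c).
  { intros c Pc. exists (df c). apply is_derive_Reals. now apply Hd. }
  destruct (MVT f id a b pr1 (fun c _ => derivable_pt_id c) Hab Hc
              (fun c _ => derivable_continuous_pt _ _ (derivable_pt_id c))) as [c [P E]].
  exists c; split; [exact P|].
  rewrite derive_pt_id in E.
  assert (D : derive_pt f c (pr1 c P) = df c).
  { apply derive_pt_eq_0. apply is_derive_Reals. now apply Hd. }
  rewrite D in E. unfold id in E. lra.
Qed.

Lemma ln_ge (w : R) : 0 < w -> ln w <= w - 1.
Proof. intros Hw. pose proof (exp_ineq1_le (ln w)). rewrite exp_ln in H; lra. Qed.

Definition k (t : R) := t * ln t.

Lemma k_cont0 : continuity_pt k 0.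
Proof.
  intros eps Heps.
  exists (Rmin 1 (eps * eps / 4)). split.
  { apply Rmin_pos; nra. }
  intros x [[_ Hx0] Hd]. simpl in *. unfold R_dist in *.
  unfold k. rewrite Rmult_0_l. rewrite Rminus_0_r in *.
  destruct (Rlt_dec 0 x) as [Hp | Hn].
  - assert (Hx1 : x < 1) by (pose proof (Rmin_l 1 (eps*eps/4)); rewrite Rabs_pos_eq in Hd; lra).
    assert (Hx2 : x < eps*eps/4) by (pose proof (Rmin_r 1 (eps*eps/4)); rewrite Rabs_pos_eq in Hd; lra).
    set (s := sqrt x).
    assert (Hs : 0 < s) by (apply sqrt_lt_R0; lra).
    assert (Hss : s * s = x) by (apply sqrt_sqrt; lra).
    assert (Hl : ln x = 2 * ln s).
    { rewrite <- Hss. rewrite ln_mult; lra. }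
    assert (Hls : ln s < 0).
    { rewrite <- ln_1. apply ln_increasing; nra. }
    assert (Hl2 : ln (/ s) <= /s - 1) by (apply ln_ge; apply Rinv_0_lt_compat; lra).
    rewrite ln_Rinv in Hl2 by lra.
    try rewrite Rminus_0_r; rewrite Rabs_left.
    2:{ rewrite Hl. nra. }
    assert (s < eps / 2).
    { apply Rnot_le_lt; intro. nra. }
    rewrite Hl.
    assert (s * (/ s) = 1) by (field; lra).
    nra.
  -  assert (Hlz : ln x = 0) by (unfold ln; destruct (Rlt_dec 0 x) as [hh|hh]; [exfalso; exact (Hn hh)|reflexivity]).
    rewrite Hlz. replace (x*0) with 0 by ring. idtac. rewrite Rabs_R0. lra.
Qed.

Definition Hf (x : R) := (1/2) * ((1 + x) * ln (1 + x) + (1 - x) * ln (1 - x)).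



Lemma ln_cosh_eq y : ln_cosh y = ln (exp y + exp (-y)) - ln 2.
Proof.
  unfold ln_cosh, cosh. unfold Rdiv. rewrite ln_mult.
  - rewrite ln_Rinv by lra. ring.
  - pose proof (exp_pos y); pose proof (exp_pos (-y)); lra.
  - lra.
Qed.

Lemma gibbs_half (p y S : R) : 0 < p -> 0 < S ->
  p * y - p * ln p - p * ln S <= exp y / S - p.
Proof.
  intros Hp HS.
  pose proof (exp_ineq1_le (y - ln p - ln S)) as H.
  replace (exp (y - ln p - ln S)) with (exp y * / p * / S) in H.
  2:{ unfold Rminus. rewrite !exp_plus, !exp_Ropp, !exp_ln by lra. reflexivity. }
  assert (p * (1 + (y - ln p - ln S)) <= p * (exp y * / p * / S)) by (apply Rmult_le_compat_l; lra).
  replace (p * (exp y * / p * / S)) with (exp y / S) in H0 by (field; lra).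
  lra.
Qed.

Lemma gibbs x y : 0 <= x <= 1 -> x * y - ln_cosh y <= Hf x.
Proof.
  intros Hx. rewrite ln_cosh_eq.
  set (S := exp y + exp (-y)).
  assert (HS : 0 < S) by (unfold S; pose proof (exp_pos y); pose proof (exp_pos (-y)); lra).
  assert (Hp : 0 < (1+x)/2) by lra.
  pose proof (gibbs_half ((1+x)/2) y S Hp HS) as G1.
  assert (Lp : ln ((1+x)/2) = ln (1+x) - ln 2).
  { unfold Rdiv. rewrite ln_mult, ln_Rinv by lra. ring. }
  rewrite Lp in G1.
  unfold Hf.
  destruct (Rle_lt_or_eq_dec x 1 (proj2 Hx)) as [Hx1 | Hx1].
  - assert (Hq : 0 < (1-x)/2) by lra.
    pose proof (gibbs_half ((1-x)/2) (-y) S Hq HS) as G2.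
    assert (Lq : ln ((1-x)/2) = ln (1-x) - ln 2).
    { unfold Rdiv. rewrite ln_mult, ln_Rinv by lra. ring. }
    rewrite Lq in G2.
    assert (exp y / S + exp (-y) / S = 1).
    { replace (exp y / S + exp (-y) / S) with (S / S) by (unfold S; field; pose proof (exp_pos y); pose proof (exp_pos (-y)); lra). field; lra. }
    lra.
  - subst x. replace (1 - 1) with 0 by ring.
    assert (exp y / S <= 1).
    { apply (Rmult_le_reg_r S); [lra|]. unfold Rdiv. rewrite Rmult_assoc, Rinv_l by lra.
      unfold S; pose proof (exp_pos (-y)); lra. }
    lra.
Qed.

Lemma attain x : 0 <= x < 1 ->
  let y0 := (1/2) * (ln (1 + x) - ln (1 - x)) in
  x * y0 - ln_cosh y0 = Hf x.
Proof.
  intros Hx y0.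
  set (a := ln (1+x)). set (b := ln (1-x)).
  set (A := exp (a/2)). set (B := exp (b/2)).
  assert (HA : 0 < A) by apply exp_pos.
  assert (HB : 0 < B) by apply exp_pos.
  assert (HA2 : A * A = 1 + x).
  { unfold A. rewrite <- exp_plus. replace (a/2 + a/2) with a by field. unfold a. apply exp_ln. lra. }
  assert (HB2 : B * B = 1 - x).
  { unfold B. rewrite <- exp_plus. replace (b/2 + b/2) with b by field. unfold b. apply exp_ln. lra. }
  assert (Ey : exp y0 = A / B).
  { unfold A, B. replace (exp (a/2) / exp (b/2)) with (exp (a/2) * exp (-(b/2))) by (rewrite exp_Ropp; reflexivity). rewrite <- exp_plus. unfold y0. fold a b. f_equal. field. }
  assert (Emy : exp (- y0) = B / A).
  { rewrite exp_Ropp, Ey. field. lra. }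
  assert (Hc : cosh y0 = / (A * B)).
  { unfold cosh. rewrite Ey, Emy.
    replace (A/B + B/A) with ((A*A + B*B)/(A*B)) by (field; lra).
    rewrite HA2, HB2. field. split; lra. }
  unfold ln_cosh. rewrite Hc, ln_Rinv, ln_mult by nra. unfold A, B. rewrite !ln_exp.
  unfold Hf, y0. fold a b. field.
Qed.

Lemma legendre_val x : 0 <= x <= 1 -> legendre ln_cosh x = Finite (Hf x).
Proof.
  intros Hx. unfold legendre. apply is_lub_Rbar_unique. split.
  - intros v [y ->]. simpl. apply gibbs; exact Hx.
  - intros b Hb.
    destruct (Rle_lt_or_eq_dec x 1 (proj2 Hx)) as [Hx1 | Hx1].
    + pose proof (attain x (conj (proj1 Hx) Hx1)) as At. simpl in At.
      specialize (Hb _ (ex_intro _ _ (eq_sym At))). exact Hb.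
    + subst x. destruct b as [M | | ]; simpl; auto.
      * apply Rnot_lt_le. intro HM.
        set (eps := Hf 1 - M).
        assert (He : 0 < eps) by (unfold eps; lra).
        set (y := - (1/2) * ln (eps / 2)).
        assert (Hv := Hb (1 * y - ln_cosh y) (ex_intro _ y eq_refl)). simpl in Hv.
        assert (Hf1 : Hf 1 = ln 2).
        { unfold Hf. replace (1 - 1) with 0 by ring. replace (1+1) with 2 by ring. field. }
        set (E := exp y).
        assert (HE : 0 < E) by apply exp_pos.
        assert (HE2 : / (E * E) = eps / 2).
        { unfold E. rewrite <- exp_plus, <- exp_Ropp. unfold y.
          replace (- (- (1 / 2) * ln (eps / 2) + - (1 / 2) * ln (eps / 2))) with (ln (eps/2)) by field.
          apply exp_ln. lra. }
        assert (Hc : cosh y = E * ((1 + eps/2) / 2)).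
        { unfold cosh. rewrite exp_Ropp. fold E. rewrite <- HE2. field. lra. }
        unfold ln_cosh in Hv. rewrite Hc, ln_mult in Hv by lra. fold E in Hv.
        unfold E in Hv. rewrite ln_exp in Hv.
        unfold Rdiv in Hv. rewrite ln_mult, ln_Rinv in Hv by lra.
        pose proof (ln_ge (1 + eps * /2)). 
        unfold eps in *. lra.
      * specialize (Hb _ (ex_intro _ 0 eq_refl)). simpl in Hb. exact Hb.
Qed.
Section S.
Variable th : R.
Definition rr x := sqrt ((th * x) ^ 2 + 1).
Definition phi x := Lambda_star_nu (th * x) - Hf x.
Definition d1 x := th^2 * x / (rr x + 1) - (1/2) * (ln (1 + x) - ln (1 - x)).
Definition d2 x := th^2 / (rr x * (rr x + 1)) - (1/2) * (/(1 + x) + /(1 - x)).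

Lemma rr_pos x : 1 <= rr x.
Proof. unfold rr. rewrite <- sqrt_1 at 1. apply sqrt_le_1_alt. pose proof (pow2_ge_0 (th*x)); lra. Qed.

Lemma d_phi x : -1 < x < 1 -> is_derive phi x (d1 x).
Proof.
  intros Hx. unfold phi, Lambda_star_nu, Hf, d1.
  pose proof (rr_pos x). unfold rr in *.
  auto_derive.
  - replace (th * x * (th * x * 1)) with ((th*x)^2) by ring. pose proof (pow2_ge_0 (th*x)). repeat split; lra.
  - replace (th * x * (th * x * 1)) with ((th*x)^2) by ring.
    set (q := sqrt ((th * x) ^ 2 + 1)) in *.
    assert (Hq : q * q = (th*x)^2 + 1) by (apply sqrt_sqrt; pose proof (pow2_ge_0 (th*x)); lra).
    unfold Rminus. field. repeat split; lra.
Qed.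

Lemma d_d1 x : -1 < x < 1 -> is_derive d1 x (d2 x).
Proof.
  intros Hx. unfold d1, d2, rr.
  pose proof (rr_pos x). unfold rr in *.
  auto_derive.
  - replace (th * x * (th * x * 1)) with ((th*x)^2) by ring. pose proof (pow2_ge_0 (th*x)). repeat split; lra.
  - replace (th * x * (th * x * 1)) with ((th*x)^2) by ring.
    set (q := sqrt ((th * x) ^ 2 + 1)) in *.
    assert (Hq : q * q = (th*x)^2 + 1) by (apply sqrt_sqrt; pose proof (pow2_ge_0 (th*x)); lra).
    match goal with |- ?L = _ => replace L with (th*th/(q+1) - th*th*((th*x)^2)/(q*((q+1)*(q+1))) - 1/2*(/(1+x) + /(1-x))) end.
    2:{ unfold Rminus. field. repeat split; lra. }
    replace ((th*x)^2) with (q*q-1) by lra.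
    field. repeat split; lra.
Qed.

Lemma rr_sq x : rr x * rr x = (th*x)^2 + 1.
Proof. unfold rr. apply sqrt_sqrt. pose proof (pow2_ge_0 (th*x)); lra. Qed.

Lemma d2_form z : 0 <= z < 1 ->
  d2 z = (th^2 + 1 - 2 * (rr z * rr z) - rr z) / (rr z * (rr z + 1) * (1 - z^2)).
Proof.
  intros Hz. pose proof (rr_pos z). pose proof (rr_sq z).
  unfold d2. set (q := rr z) in *.
  assert (th^2 = th^2 * (1 - z^2) / (1 - z^2)) by (field; nra).
  assert (th^2 * (1 - z^2) = th^2 + 1 - q*q) by nra.
  rewrite H1 at 1. rewrite H2. field. repeat split; nra.
Qed.

Lemma d2_sign a z : 0 <= a -> a <= z -> z < 1 -> d2 a < 0 -> d2 z < 0.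
Proof.
  intros Ha Haz Hz Hd.
  rewrite d2_form in Hd by lra. rewrite d2_form by lra.
  pose proof (rr_pos a). pose proof (rr_pos z).
  assert (Hm : rr a <= rr z).
  { unfold rr. apply sqrt_le_1_alt. assert (0 <= th*th*(z*z - a*a)) by (apply Rmult_le_pos; nra). nra. }
  assert (Da : 0 < rr a * (rr a + 1) * (1 - a^2)) by (apply Rmult_lt_0_compat; nra).
  assert (Dz : 0 < rr z * (rr z + 1) * (1 - z^2)) by (apply Rmult_lt_0_compat; nra).
  assert (Na : th ^ 2 + 1 - 2 * (rr a * rr a) - rr a < 0).
  { apply Rnot_le_lt. intro N. apply (Rlt_not_le _ _ Hd). apply Rdiv_le_0_compat; lra. }
  assert (Nz : th ^ 2 + 1 - 2 * (rr z * rr z) - rr z < 0) by nra.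
  unfold Rdiv. apply Rmult_neg_pos; [lra | apply Rinv_0_lt_compat; lra].
Qed.
End S.

Lemma deriv_cont f x l : is_derive f x l -> continuity_pt f x.
Proof.
  intros H. apply derivable_continuous_pt. exists l. apply is_derive_Reals. exact H.
Qed.



Lemma phi_cont1 th : continuity_pt (phi th) 1.
Proof.
  unfold phi.
  apply continuity_pt_minus.
  - apply (deriv_cont _ _ (th * th * 1 / (rr th 1 + 1))).
    unfold Lambda_star_nu, rr. auto_derive.
    + replace (th * 1 * (th * 1 * 1)) with ((th*1)^2) by ring. pose proof (pow2_ge_0 (th*1)).
      assert (1 <= sqrt ((th * 1) ^ 2 + 1)) by (rewrite <- sqrt_1 at 1; apply sqrt_le_1_alt; lra).
      repeat split; lra.
    + replace (th * 1 * (th * 1 * 1)) with ((th*1)^2) by ring.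
      assert (1 <= sqrt ((th * 1) ^ 2 + 1)) by (rewrite <- sqrt_1 at 1; apply sqrt_le_1_alt; pose proof (pow2_ge_0 (th*1)); lra).
      set (q := sqrt ((th * 1) ^ 2 + 1)) in *. field. lra.
  - change (continuity_pt (fun x => 1/2 * ((1 + x) * ln (1 + x) + k (1 - x))) 1).
    apply continuity_pt_mult; [apply continuity_pt_const; intros a b; reflexivity|].
    apply continuity_pt_plus.
    + apply (deriv_cont _ _ (ln 2 + 1)). auto_derive; [lra|]. replace (1+1) with 2 by ring. field.
    + change (continuity_pt (comp k (fun x => 1 - x)) 1).
      apply continuity_pt_comp.
      * apply (deriv_cont _ _ (-1)). auto_derive; [exact I|ring].
      * replace (1 - 1) with 0 by ring. exact k_cont0.
Qed.



Lemma phi_nonneg th (Hln2 : Lambda_star_nu th = ln 2) x : 0 <= x <= 1 -> 0 <= phi th x.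
Proof.
  intros Hx.
  assert (P0 : phi th 0 = 0).
  { unfold phi, Lambda_star_nu, Hf. rewrite Rmult_0_r.
    replace (0^2+1) with 1 by ring. rewrite sqrt_1. replace ((1+1)/2) with 1 by field.
    replace (1+0) with 1 by ring. replace (1-0) with 1 by ring. rewrite ln_1. ring. }
  assert (P1 : phi th 1 = 0).
  { unfold phi. rewrite Rmult_1_r, Hln2. unfold Hf. replace (1 - 1) with 0 by ring.
    replace (1+1) with 2 by ring. field. }
  assert (D0 : d1 th 0 = 0).
  { unfold d1. replace (1+0) with 1 by ring. replace (1-0) with 1 by ring. rewrite ln_1.
    pose proof (rr_pos th 0). field. lra. }
  apply Rnot_lt_le. intro Hneg.
  destruct (Req_dec x 0) as [->|Hx0]; [lra|].
  destruct (Req_dec x 1) as [->|Hx1]; [lra|].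
  assert (Hx' : 0 < x < 1) by lra.
  destruct (mvt_open (phi th) (d1 th) 0 x) as [a [Ha Ea]]; [lra| | |].
  { intros c Hc. apply d_phi. lra. }
  { intros c Hc. apply (deriv_cont _ _ (d1 th c)). apply d_phi. lra. }
  destruct (mvt_open (phi th) (d1 th) x 1) as [b [Hb Eb]]; [lra| | |].
  { intros c Hc. apply d_phi. lra. }
  { intros c Hc. destruct (Req_dec c 1) as [->|Hc1]; [apply phi_cont1|].
    apply (deriv_cont _ _ (d1 th c)). apply d_phi. lra. }
  assert (Na : d1 th a < 0).
  { rewrite P0 in Ea. apply Rnot_le_lt. intro. assert (0 <= d1 th a * (x - 0)) by (apply Rmult_le_pos; lra). lra. }
  assert (Nb : 0 < d1 th b).
  { rewrite P1 in Eb. apply Rnot_le_lt. intro. assert (d1 th b * (1 - x) <= 0) by (apply Rmult_le_0_r; lra). lra. }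
  destruct (mvt_open (d1 th) (d2 th) 0 a) as [a' [Ha' Ea']]; [lra| | |].
  { intros c Hc. apply d_d1. lra. }
  { intros c Hc. apply (deriv_cont _ _ (d2 th c)). apply d_d1. lra. }
  assert (Na' : d2 th a' < 0).
  { rewrite D0 in Ea'. apply Rnot_le_lt. intro. assert (0 <= d2 th a' * (a - 0)) by (apply Rmult_le_pos; lra). lra. }
  destruct (mvt_open (d1 th) (d2 th) a b) as [z [Hz Ez]]; [lra| | |].
  { intros c Hc. apply d_d1. lra. }
  { intros c Hc. apply (deriv_cont _ _ (d2 th c)). apply d_d1. lra. }
  assert (Nz : d2 th z < 0) by (apply (d2_sign th a'); lra).
  assert (d2 th z * (b - a) < 0) by (apply Rmult_neg_pos; lra).
  lra.
Qed.

Theorem lemma6 (theta : R) (Htheta : 0 < theta)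
  (Hln2 : Lambda_star_nu theta = ln 2) :
  forall x : R, 0 <= x <= 1 ->
    legendre ln_cosh x
      = Finite ((1/2) * ((1 + x) * ln (1 + x) + (1 - x) * ln (1 - x)))
    /\ Rbar_le (legendre ln_cosh x) (Finite (Lambda_star_nu (theta * x))).
Proof.
  intros x Hx.
  pose proof (legendre_val x Hx) as L. unfold Hf in L.
  split; [exact L|]. rewrite L. simpl.
  pose proof (phi_nonneg theta Hln2 x Hx) as P. unfold phi, Hf in P. lra.
Qed.
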